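(* Let $\mu^\ast$ be an upper quasi-density on $\mathbb{H}$ and $\mu_\ast(X):=1-\mu^\ast(\mathbb{H}\setminus X)$ the associated lower quasi-density. Then both $\mu^\ast$ and $\mu_\ast$ have the weak Darboux property: for $f\in\{\mu^\ast,\mu_\ast\}$, every $X\subseteq\mathbb{H}$ and every $a\in[f(\emptyset),f(X)]$, there exists $A\subseteq X$ with $f(A)=a$.
   Context: $\mathbb{N}=\{0,1,2,\dots\}$, $\mathbb{N}^+=\{1,2,\dots\}$; $\mathbb{H}$ is one of $\mathbb{Z},\mathbb{N},\mathbb{N}^+$. For $X\subseteq\mathbb{H}$, $k\in\mathbb{N}^+$, $h\in\mathbb{N}$, $k\cdot X+h:=\{kx+h:x\in X\}$. An upper quasi-density on $\mathbb{H}$ is a function $\mu^\ast:\mathcal{P}(\mathbb{H})\to\mathbb{R}$ with $\mu^\ast(\mathbb{H})=1$, $\mu^\ast(X)\le1$ for all $X$, $\mu^\ast(X\cup Y)\le\mu^\ast(X)+\mu^\ast(Y)$ for all $X,Y$, and $\mu^\ast(k\cdot X+h)=\frac1k\mu^\ast(X)$ for all $X\subseteq\mathbb{H}$, $h,k\in\mathbb{N}^+$. *)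

(* Defs.v *)
From Stdlib Require Import Reals ZArith.
Open Scope R_scope.

Inductive HKind : Type := H_Z | H_N | H_Npos.

Definition inH (H : HKind) (z : Z) : Prop :=
  match H with
  | H_Z => True
  | H_N => (0 <= z)%Z
  | H_Npos => (0 < z)%Z
  end.

Definition subsetZ (X Y : Z -> Prop) : Prop := forall z, X z -> Y z.
Definition emptyZ : Z -> Prop := fun _ => False.
Definition unionZ (X Y : Z -> Prop) : Z -> Prop := fun z => X z \/ Y z.
Definition diffZ (X Y : Z -> Prop) : Z -> Prop := fun z => X z /\ ~ Y z.

Definition affine_image (k h : Z) (X : Z -> Prop) : Z -> Prop :=
  fun z => exists x, X x /\ z = (k * x + h)%Z.

(* Upper quasi-density on H (only its values on subsets of H matter). *)
Definition upper_quasi_density (H : HKind) (mu : (Z -> Prop) -> R) : Prop :=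
  mu (inH H) = 1 /\
  (forall X, subsetZ X (inH H) -> mu X <= 1) /\
  (forall X Y, subsetZ X (inH H) -> subsetZ Y (inH H) ->
     mu (unionZ X Y) <= mu X + mu Y) /\
  (forall X (h k : Z), subsetZ X (inH H) -> (0 < h)%Z -> (0 < k)%Z ->
     mu (affine_image k h X) = / IZR k * mu X).

Definition lower_of (H : HKind) (mu : (Z -> Prop) -> R) : (Z -> Prop) -> R :=
  fun X => 1 - mu (diffZ (inH H) X).

Definition weak_darboux (H : HKind) (f : (Z -> Prop) -> R) : Prop :=
  forall X a, subsetZ X (inH H) -> f emptyZ <= a -> a <= f X ->
    exists A, subsetZ A X /\ f A = a.

(* Main.v *)
Require Import Defs.
From Stdlib Require Import Reals ZArith.
From Stdlib Require Import Lia Lra Psatz Classical FunctionalExtensionality PropExtensionality.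
Open Scope R_scope.

Lemma pext (P Q : Z -> Prop) : (forall z, P z <-> Q z) -> P = Q.
Proof. intro H; apply functional_extensionality; intro z; apply propositional_extensionality; apply H. Qed.

Lemma mu_ext (mu : (Z -> Prop) -> R) (P Q : Z -> Prop) : (forall z, P z <-> Q z) -> mu P = mu Q.
Proof. intro H; rewrite (pext P Q H); reflexivity. Qed.

Lemma mu_le_ext (mu : (Z -> Prop) -> R) (P Q : Z -> Prop) r : (forall z, P z <-> Q z) -> mu Q <= r -> mu P <= r.
Proof. intros H1 H2; rewrite (mu_ext mu P Q H1); exact H2. Qed.

Lemma mu_empty H mu : upper_quasi_density H mu -> mu emptyZ = 0.
Proof.
  intros [H1 [H2 [H3 H4]]].
  assert (E: affine_image 2 1 emptyZ = emptyZ).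
  { apply pext; intro z; unfold affine_image, emptyZ; split; [intros [x [[] _]] | intros []]. }
  pose proof (H4 emptyZ 1%Z 2%Z ltac:(intros z [])) as E2.
  rewrite E in E2. specialize (E2 ltac:(lia) ltac:(lia)). lra.
Qed.

Lemma class_bound H mu (K : Z) (Q : Z -> Prop) : upper_quasi_density H mu -> (0 < K)%Z ->
  subsetZ Q (inH H) -> (forall q q', Q q -> Q q' -> Z.modulo q K = Z.modulo q' K) -> mu Q <= / IZR K.
Proof.
  intros HU HK HQ Hc. destruct HU as [H1 [H2 [H3 H4]]].
  assert (HKR: 0 < IZR K) by (apply IZR_lt; lia).
  assert (Hfin : forall Y, subsetZ Y (inH H) -> / IZR K * mu Y <= / IZR K).
  { intros Y HY. pose proof (H2 Y HY).
    rewrite <- (Rmult_1_r (/ IZR K)) at 2. apply Rmult_le_compat_l; [left; apply Rinv_0_lt_compat; lra | lra]. }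
  destruct (classic (exists q0, Q q0)) as [[q0 Hq0] | Hne].
  - set (rho := Z.modulo q0 K).
    assert (Hr : (0 <= rho < K)%Z) by (apply Z.mod_pos_bound; lia).
    set (Y := fun y => Q (K * (y - 1) + rho)%Z).
    assert (HY : subsetZ Y (inH H)).
    { intros y Hy. unfold Y in Hy. pose proof (HQ _ Hy) as Hin.
      destruct H; simpl in *; try exact I; nia. }
    assert (Eq : affine_image 1 (2*K) Q = affine_image K (rho + K) Y).
    { apply pext; intro z; unfold affine_image, Y; split.
      - intros [q [Hq ->]]. assert (Hm : (q mod K = rho)%Z) by (unfold rho; apply Hc; auto).
        pose proof (Z_div_mod_eq_full q K).
        exists (q / K + 1)%Z. split.
        + replace (K * (q / K + 1 - 1) + rho)%Z with q; [exact Hq|]. nia.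
        + nia.
      - intros [y [Hy ->]]. exists (K*(y-1)+rho)%Z. split; [exact Hy| ring]. }
    pose proof (H4 Q (2*K)%Z 1%Z HQ ltac:(lia) ltac:(lia)) as E1.
    pose proof (H4 Y (rho+K)%Z K HY ltac:(lia) HK) as E2.
    rewrite Eq in E1. rewrite E2 in E1.
    assert (EQ : mu Q = / IZR K * mu Y) by lra. rewrite EQ. apply Hfin; exact HY.
  - assert (Eq: Q = affine_image K K emptyZ).
    { apply pext; intro z; split; [intro Hz; exfalso; apply Hne; eauto | intros [x [[] _]]]. }
    rewrite Eq, (H4 emptyZ K K ltac:(intros z []) HK HK). apply Hfin. intros z [].
Qed.

Fixpoint rv (m : nat) (n : Z) : Z :=
  match m with
  | O => 0%Z
  | S m' => (2 * rv m' n + (n / 2 ^ Z.of_nat m') mod 2)%Z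
  end.

Lemma rv_bit m n : (2 * rv m n <= rv (S m) n <= 2 * rv m n + 1)%Z.
Proof. cbn [rv]. pose proof (Z.mod_pos_bound (n / 2^Z.of_nat m) 2 ltac:(lia)). lia. Qed.

Lemma rv_nonneg m n : (0 <= rv m n)%Z.
Proof. induction m; cbn [rv]; [lia|]. pose proof (Z.mod_pos_bound (n / 2^Z.of_nat m) 2 ltac:(lia)). lia. Qed.

Lemma rv_mod m n n' : rv m n = rv m n' -> (n mod 2 ^ Z.of_nat m = n' mod 2 ^ Z.of_nat m)%Z.
Proof.
  revert n n'. induction m; intros n n' E.
  - change (2 ^ Z.of_nat 0)%Z with 1%Z. rewrite !Z.mod_1_r; reflexivity.
  - cbn [rv] in E.
    pose proof (Z.mod_pos_bound (n / 2^Z.of_nat m) 2 ltac:(lia)).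
    pose proof (Z.mod_pos_bound (n' / 2^Z.of_nat m) 2 ltac:(lia)).
    assert (Ea : rv m n = rv m n') by lia.
    assert (Eb : ((n / 2^Z.of_nat m) mod 2 = (n' / 2^Z.of_nat m) mod 2)%Z) by lia.
    assert (Hp : (0 < 2 ^ Z.of_nat m)%Z) by (apply Z.pow_pos_nonneg; lia).
    rewrite Nat2Z.inj_succ, Z.pow_succ_r by lia. rewrite (Z.mul_comm 2).
    rewrite !Z.rem_mul_r by lia. rewrite (IHm n n' Ea), Eb. reflexivity.
Qed.

Lemma rv_nest m d n : (rv m n * 2^Z.of_nat d <= rv (m + d) n < (rv m n + 1) * 2^Z.of_nat d)%Z.
Proof.
  induction d.
  - rewrite Nat.add_0_r. change (2 ^ Z.of_nat 0)%Z with 1%Z. lia.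
  - rewrite Nat.add_succ_r. pose proof (rv_bit (m+d) n).
    rewrite Nat2Z.inj_succ, Z.pow_succ_r by lia. nia.
Qed.

Lemma frac_lt a b p q : 0 < p -> 0 < q -> a * q <= b -> a / p < (b + 1) / (p * q).
Proof.
  intros Hp Hq H. assert (E: a / p = a*q/(p*q)) by (field; lra). rewrite E.
  unfold Rdiv. apply Rmult_lt_compat_r. apply Rinv_0_lt_compat; nra. lra.
Qed.

Lemma frac_lt2 a b p q : 0 < p -> 0 < q -> a < (b + 1) * q -> a / (p * q) < (b + 1) / p.
Proof.
  intros Hp Hq H. assert (E: (b+1) / p = (b+1)*q/(p*q)) by (field; lra). rewrite E.
  unfold Rdiv. apply Rmult_lt_compat_r. apply Rinv_0_lt_compat; nra. lra.
Qed.

Lemma pow2_pos m : 0 < 2 ^ m.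
Proof. apply pow_lt; lra. Qed.

Lemma rv_interval m m' n : IZR (rv m n) / 2^m < (IZR (rv m' n) + 1) / 2^m'.
Proof.
  destruct (Nat.le_ge_cases m m') as [Hle | Hge].
  - destruct (Nat.le_exists_sub m m' Hle) as [d [-> _]].
    rewrite Nat.add_comm, pow_add. apply frac_lt; try apply pow2_pos.
    destruct (rv_nest m d n) as [A _].
    apply IZR_le in A. rewrite mult_IZR, <- pow_IZR in A. exact A.
  - destruct (Nat.le_exists_sub m' m Hge) as [d [-> _]].
    rewrite Nat.add_comm, pow_add. apply frac_lt2; try apply pow2_pos.
    destruct (rv_nest m' d n) as [_ A].
    apply IZR_lt in A. rewrite mult_IZR, plus_IZR, <- pow_IZR in A. exact A.
Qed.

Definition D (t : R) (n : Z) : Prop := exists m : nat, (IZR (rv m n) + 1) / 2 ^ m <= t.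

Lemma D_mono s t n : s <= t -> D s n -> D t n.
Proof. intros H [m Hm]; exists m; lra. Qed.

Lemma D0 n : ~ D 0 n.
Proof.
  intros [m Hm]. pose proof (rv_nonneg m n) as A. apply IZR_le in A.
  pose proof (pow2_pos m).
  assert (0 < (IZR (rv m n) + 1) / 2 ^ m) by (apply Rdiv_lt_0_compat; lra). lra.
Qed.

Lemma D1 n : D 1 n.
Proof. exists O. simpl. lra. Qed.

Lemma fin_union H mu (P : Z -> Prop) (g : Z -> Z) (c : R) (lo : Z) (N : nat) :
  upper_quasi_density H mu -> subsetZ P (inH H) ->
  (forall j, mu (fun n => P n /\ g n = j) <= c) ->
  mu (fun n => P n /\ (lo <= g n < lo + Z.of_nat N)%Z) <= INR N * c.
Proof.
  intros HU HP Hf. pose proof HU as [H1 [H2 [H3 H4]]]. induction N.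
  - apply (mu_le_ext mu _ emptyZ).
    { intro z; unfold emptyZ; split; [intros [_ Hr]; simpl in Hr; lia | intros []]. }
    rewrite (mu_empty H mu HU). simpl; lra.
  - apply (mu_le_ext mu _ (unionZ (fun n => P n /\ (lo <= g n < lo + Z.of_nat N)%Z)
                                 (fun n => P n /\ g n = (lo + Z.of_nat N)%Z))).
    { intro z; unfold unionZ; rewrite Nat2Z.inj_succ; split.
      - intros [Hp Hr]. destruct (Z.eq_dec (g z) (lo + Z.of_nat N)); [right|left]; split; auto; lia.
      - intros [[Hp Hr]|[Hp Hr]]; split; auto; lia. }
    eapply Rle_trans. apply H3; intros z Hz; apply HP; apply Hz.
    rewrite S_INR. specialize (Hf (lo + Z.of_nat N)%Z). lra.
Qed.

Lemma piece_bound H mu X s t m : upper_quasi_density H mu -> subsetZ X (inH H) -> s <= t ->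
  mu (fun n => X n /\ D t n /\ ~ D s n) <= t - s + 2 / 2^m.
Proof.
  intros HU HX Hst.
  set (P := fun n => X n /\ D t n /\ ~ D s n).
  set (p := 2 ^ m). assert (Hp : 0 < p) by apply pow2_pos.
  set (lo := (up (s * p) - 1)%Z). set (hi := up (t * p)).
  destruct (archimed (s*p)) as [A1 A2]; destruct (archimed (t*p)) as [B1 B2].
  assert (Hj: forall n, P n -> (lo <= rv m n < hi)%Z).
  { intros n [HXn [[m' Hm'] Hns]].
    pose proof (rv_interval m m' n) as HI.
    assert (Hn1 : IZR (rv m n) / p < t) by (unfold p; lra).
    assert (Hn2 : ~ (IZR (rv m n) + 1)/p <= s) by (intro; apply Hns; exists m; auto).
    assert (Hn3 : IZR (rv m n) < t * p).
    { replace (IZR (rv m n)) with (IZR (rv m n) / p * p) by (field; lra).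
      apply Rmult_lt_compat_r; lra. }
    assert (Hn4 : s * p < IZR (rv m n) + 1).
    { apply Rnot_le_lt in Hn2.
      replace (IZR (rv m n) + 1) with ((IZR (rv m n) + 1) / p * p) by (field; lra).
      apply Rmult_lt_compat_r; lra. }
    split.
    - assert (Hz: (up (s*p) < rv m n + 2)%Z). { apply lt_IZR. rewrite plus_IZR. lra. }
      unfold lo; lia.
    - apply lt_IZR. unfold hi; lra. }
  assert (Hlo : IZR lo = IZR (up (s*p)) - 1) by (unfold lo; rewrite minus_IZR; reflexivity).
  assert (Hhl : (lo < hi)%Z).
  { apply lt_IZR. rewrite Hlo. unfold hi. assert (s * p <= t * p) by (apply Rmult_le_compat_r; lra). lra. }
  set (N := Z.to_nat (hi - lo)).
  assert (HN : Z.of_nat N = (hi - lo)%Z) by (unfold N; apply Z2Nat.id; lia).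
  assert (HPH : subsetZ P (inH H)) by (intros z Hz; apply HX; apply Hz).
  apply Rle_trans with (INR N * / p).
  - apply (mu_le_ext mu _ (fun n => P n /\ (lo <= rv m n < lo + Z.of_nat N)%Z)).
    { intro z; split; [intro Hz; split; [exact Hz | rewrite HN; specialize (Hj z Hz); lia] | intros [Hz _]; exact Hz]. }
    apply (fin_union H mu P (rv m) (/ p) lo N HU HPH).
    intro j. replace (/ p) with (/ IZR (2 ^ Z.of_nat m)) by (unfold p; rewrite <- pow_IZR; reflexivity).
    apply (class_bound H mu (2 ^ Z.of_nat m) _ HU).
    + apply Z.pow_pos_nonneg; lia.
    + intros z Hz; apply HPH; apply Hz.
    + intros q q' [_ Hq] [_ Hq']. apply rv_mod. congruence.
  - assert (HNR : INR N = IZR hi - IZR lo) by (rewrite INR_IZR_INZ, HN, minus_IZR; reflexivity).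
    rewrite HNR.
    assert (E : t - s + 2 / p = ((t - s) * p + 2) * / p) by (field; lra). rewrite E.
    apply Rmult_le_compat_r; [left; apply Rinv_0_lt_compat; lra|].
    rewrite Hlo. unfold hi. nra.
Qed.

Lemma pow2_ge m : INR m + 1 <= 2 ^ m.
Proof.
  induction m; [simpl; lra|]. rewrite S_INR. change (2 ^ S m) with (2 * 2 ^ m). pose proof (pos_INR m). lra.
Qed.

Lemma diff_bound H mu X s t : upper_quasi_density H mu -> subsetZ X (inH H) -> s <= t ->
  mu (fun n => X n /\ D t n /\ ~ D s n) <= t - s.
Proof.
  intros HU HX Hst. apply Rnot_lt_le; intro Hlt.
  set (eps := mu (fun n => X n /\ D t n /\ ~ D s n) - (t - s)).
  assert (He : 0 < eps) by (unfold eps; lra).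
  destruct (archimed (2/eps)) as [A1 _].
  assert (Hpos : 0 < 2 / eps) by (apply Rdiv_lt_0_compat; lra).
  set (m := Z.to_nat (up (2/eps))).
  assert (Hm : 2 / eps < INR m).
  { unfold m. rewrite INR_IZR_INZ, Z2Nat.id; [lra|]. apply le_IZR. lra. }
  pose proof (pow2_ge m) as Hpm.
  assert (Hp : 2 / eps < 2 ^ m) by lra.
  pose proof (pow2_pos m) as Hp0.
  assert (H2 : 2 < eps * 2 ^ m).
  { apply Rmult_lt_compat_l with (r := eps) in Hp; [|lra].
    replace (eps * (2 / eps)) with 2 in Hp by (field; lra). exact Hp. }
  assert (H3 : 2 / 2 ^ m < eps).
  { apply (Rmult_lt_reg_r (2 ^ m)); [lra|]. unfold Rdiv. rewrite Rmult_assoc, Rinv_l; lra. }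
  pose proof (piece_bound H mu X s t m HU HX Hst). unfold eps in H3. lra.
Qed.

Lemma ivt (F : R -> R) (a : R) :
  (forall s t, 0 <= s -> s <= t -> t <= 1 -> F t <= F s + (t - s)) ->
  F 0 <= a -> a <= F 1 -> exists t, 0 <= t <= 1 /\ F t = a.
Proof.
  intros HL H0 H1.
  set (E := fun t => 0 <= t <= 1 /\ F t <= a).
  assert (Hb : bound E) by (exists 1; intros x [Hx _]; lra).
  assert (He : exists x, E x) by (exists 0; split; [lra | exact H0]).
  destruct (completeness E Hb He) as [ts [Hub Hlub]].
  assert (Hts0 : 0 <= ts) by (apply Hub; split; [lra | exact H0]).
  assert (Hts1 : ts <= 1) by (apply Hlub; intros x [Hx _]; lra).
  assert (C1 : F ts <= a).
  { apply Rnot_lt_le; intro Hc. set (eps := F ts - a).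
    assert (~ is_upper_bound E (ts - eps)) as Hn.
    { intro Hu. pose proof (Hlub _ Hu). unfold eps in *. lra. }
    apply Hn. intros s [Hs Hfs]. apply Rnot_lt_le; intro Hlt.
    assert (s <= ts) by (apply Hub; split; assumption).
    pose proof (HL s ts ltac:(lra) ltac:(lra) ltac:(lra)). unfold eps in *. lra. }
  exists ts. split; [lra|].
  destruct (Rle_lt_or_eq_dec ts 1 Hts1) as [Hlt | Heq].
  - apply Rle_antisym; [exact C1|]. apply Rnot_lt_le; intro Hc.
    set (d := Rmin (a - F ts) (1 - ts) / 2).
    assert (Hd : 0 < d) by (unfold d; apply Rmin_case; lra).
    assert (Hd1 : d < a - F ts) by (unfold d; pose proof (Rmin_l (a - F ts) (1 - ts)); lra).
    assert (Hd2 : d < 1 - ts) by (unfold d; pose proof (Rmin_r (a - F ts) (1 - ts)); lra).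
    pose proof (HL ts (ts + d) Hts0 ltac:(lra) ltac:(lra)).
    assert (E (ts + d)) by (split; [lra | lra]).
    pose proof (Hub _ H2). lra.
  - subst ts. lra.
Qed.

Theorem mainTheorem2 (H : HKind) (mu : (Z -> Prop) -> R) :
  upper_quasi_density H mu ->
  weak_darboux H mu /\ weak_darboux H (lower_of H mu).
Proof.
  intros HU. pose proof HU as [H1 [H2 [H3 H4]]]. split.
  - intros X a HX Ha1 Ha2.
    destruct (ivt (fun t => mu (fun n => X n /\ D t n)) a) as [t [Ht Heq]].
    + intros s t Hs Hst Ht.
      apply Rle_trans with (mu (fun n => X n /\ D s n) + mu (fun n => X n /\ D t n /\ ~ D s n)).
      * apply (mu_le_ext mu _ (unionZ (fun n => X n /\ D s n) (fun n => X n /\ D t n /\ ~ D s n))).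
        { intro z; unfold unionZ; split.
          - intros [Hx Hd]; destruct (classic (D s z)); [left|right]; tauto.
          - intros [[Hx Hd]|[Hx [Hd _]]]; [split; [auto| apply (D_mono s t); auto] | auto]. }
        apply H3; intros z Hz; apply HX; apply Hz.
      * pose proof (diff_bound H mu X s t HU HX Hst). lra.
    + apply (mu_le_ext mu _ emptyZ); [|exact Ha1].
      intro z; unfold emptyZ; split; [intros [_ Hd]; exact (D0 z Hd) | intros []].
    + rewrite (mu_ext mu _ X); [exact Ha2|]. intro z; split; [intros [Hz _]; exact Hz | intro Hz; split; [exact Hz | apply D1]].
    + exists (fun n => X n /\ D t n). split; [intros z [Hz _]; exact Hz | exact Heq].
  - intros X a HX Ha1 Ha2. unfold lower_of in *.
    destruct (ivt (fun t => 1 - mu (diffZ (inH H) (fun n => X n /\ D t n))) a) as [t [Ht Heq]].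
    + intros s t Hs Hst Ht.
      assert (mu (diffZ (inH H) (fun n => X n /\ D s n)) <=
              mu (diffZ (inH H) (fun n => X n /\ D t n)) + mu (fun n => X n /\ D t n /\ ~ D s n)).
      { apply (mu_le_ext mu _ (unionZ (diffZ (inH H) (fun n => X n /\ D t n)) (fun n => X n /\ D t n /\ ~ D s n))).
        { intro z; unfold unionZ, diffZ; split.
          - intros [Hh Hn]. destruct (classic (X z /\ D t z)); [right|left]; tauto.
          - intros [[Hh Hn]|[Hx [Hd Hns]]].
            + split; [exact Hh|]. intros [Hx Hd]; apply Hn; split; [exact Hx | apply (D_mono s t); auto].
            + split; [apply HX; exact Hx | tauto]. }
        apply H3; [intros z Hz; apply Hz | intros z Hz; apply HX; apply Hz]. }
      pose proof (diff_bound H mu X s t HU HX Hst). lra.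
    + rewrite (mu_ext mu _ (diffZ (inH H) emptyZ)); [exact Ha1|].
      intro z; unfold diffZ, emptyZ; split; [intros [Hh _]; split; [exact Hh | intros []] |
        intros [Hh _]; split; [exact Hh | intros [_ Hd]; exact (D0 z Hd)]].
    + rewrite (mu_ext mu _ (diffZ (inH H) X)); [exact Ha2|].
      intro z; unfold diffZ; split; [intros [Hh Hn]; split; [exact Hh | intro Hx; apply Hn; split; [exact Hx | apply D1]] |
        intros [Hh Hn]; split; [exact Hh | intros [Hx _]; exact (Hn Hx)]].
    + exists (fun n => X n /\ D t n). split; [intros z [Hz _]; exact Hz | exact Heq].
Qed.
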